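(* For any $\epsilon>0$ and any positive integer $r$, there exist a graph $G$ with $\Delta(G)=r$ and a tree $T$, each with $n$ vertices (for some $n$), such that $3\Delta(G)+\ell(T)-2<(1+\epsilon)n$, but $G$ and $T$ do not pack.
   Context: All graphs are finite and simple; $\Delta(G)$ is the maximum degree of $G$ and $\ell(T)$ is the number of leaves (vertices of degree $1$) of $T$. For graphs $G$ and $H$ with $|V(G)|\ge |V(H)|$, we say $G$ and $H$ pack if there is an injective function $f:V(H)\to V(G)$ such that for every edge $xy\in E(H)$, $f(x)f(y)\notin E(G)$. *)

(* Defs.v *)
From mathcomp Require Import all_boot all_order all_algebra.
From mathcomp Require Import reals.
Set Implicit Arguments. Unset Strict Implicit. Unset Printing Implicit Defensive.

Section Graphs.
Variable V : finType.

Definition simple_graph (e : rel V) : Prop := symmetric e /\ irreflexive e.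

Definition deg (e : rel V) (x : V) : nat := #|[set y | e x y]|.

Definition maxdeg (e : rel V) : nat := \max_(x : V) deg e x.

Definition leaves (e : rel V) : nat := #|[set x | deg e x == 1%N]|.

Definition connected (e : rel V) : Prop := forall x y : V, connect e x y.

Definition acyclic (e : rel V) : Prop :=
  forall c : seq V, uniq c -> (2 < size c)%N -> ~~ cycle e c.

Definition is_tree (e : rel V) : Prop :=
  simple_graph e /\ connected e /\ acyclic e.
End Graphs.

Definition pack (V W : finType) (G : rel V) (H : rel W) : Prop :=
  exists f : W -> V, injective f /\ forall x y : W, H x y -> ~~ G (f x) (f y).

(* Main.v *)
Require Import Defs.
From mathcomp Require Import all_boot all_order all_algebra.
From mathcomp Require Import reals.
From mathcomp Require Import zify.
From mathcomp Require Import lra.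
Import Order.TTheory GRing.Theory Num.Theory.

Section Blocks.
Variables k m : nat.
Hypothesis hk : (0 < k)%N.

Definition Gb : rel 'I_(k * m) := fun x y => (x != y) && (x %/ k == y %/ k)%N.

Lemma deg_Gb (x : 'I_(k * m)) : deg Gb x = k.-1.
Proof.
pose q := (x %/ k)%N.
have hq : (q < m)%N by rewrite /q ltn_divLR //; have := ltn_ord x; lia.
have P (j : 'I_k) : (q * k + j < k * m)%N.
  have hj := ltn_ord j.
  have : (q.+1 * k <= m * k)%N by rewrite leq_mul2r hq orbT.
  rewrite mulSn; lia.
pose h (j : 'I_k) : 'I_(k * m) := Ordinal (P j).
have hinj : injective h.
  by move=> a b /(congr1 val) /= /addnI /val_inj.
have S : [set y : 'I_(k * m) | q == y %/ k]%N = h @: setT.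
  apply/setP => y; rewrite inE; apply/eqP/imsetP.
  - move=> hy; exists (Ordinal (ltn_pmod y hk)) => //.
    by apply/val_inj => /=; rewrite hy -divn_eq.
  - by case=> j _ ->; rewrite /= divnMDl // divn_small // addn0.
have hS : #|[set y : 'I_(k * m) | q == y %/ k]%N| = k.
  by rewrite S card_imset // cardsT card_ord.
have E : [set y | Gb x y] = [set y : 'I_(k * m) | q == y %/ k]%N :\ x.
  by apply/setP => y; rewrite !inE /Gb eq_sym.
rewrite /deg E.
have := cardsD1 x [set y : 'I_(k * m) | q == y %/ k]%N.
rewrite hS inE eqxx /=; lia.
Qed.
End Blocks.
Definition Ts (n : nat) : rel 'I_n :=
  fun x y => (x != y) && ((val x == 0%N) || (val y == 0%N)).

Lemma Ts_noncyc n (a b d : 'I_n) s :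
  b != 0%N :> nat -> uniq [:: a, b, d & s] -> ~~ cycle (@Ts n) [:: a, b, d & s].
Proof.
move=> hb hu; apply/negP => /= /andP [hab /andP [hbd _]].
move: hab hbd; rewrite /Ts (negbTE hb) !orbF => /andP [_ /eqP ha] /andP [_ /eqP hd].
move: hu; rewrite /= !inE.
have -> : a = d by apply/val_inj; rewrite /= ha hd.
by rewrite eqxx /= ?orbT ?andbF.
Qed.

Lemma Ts_tree n : (0 < n)%N -> is_tree (@Ts n).
Proof.
move=> hn; split; [split|split].
- by move=> x y; rewrite /Ts eq_sym orbC.
- by move=> x; rewrite /Ts eqxx.
- pose z : 'I_n := Ordinal hn.
  have hz x : connect (@Ts n) x z.
    case: (eqVneq x z) => [->|hxz]; first exact: connect0.
    by apply: connect1; rewrite /Ts hxz orbT.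
  move=> x y; apply: connect_trans (hz x) _.
  case: (eqVneq z y) => [->|hzy]; first exact: connect0.
  by apply: connect1; rewrite /Ts hzy.
- case=> [|a [|b [|d s]]] // hu hs.
  case: (eqVneq (val b) 0%N) => hb; last exact: Ts_noncyc.
  have hu' : uniq (rot 1 [:: a, b, d & s]) by rewrite rot_uniq.
  rewrite -(rot_cycle 1).
  move: hu'; rewrite /rot /= => hu'.
  have hd : val d != 0%N.
    apply/eqP => hd; move: hu; rewrite /= !inE.
    have -> : b = d by apply/val_inj; rewrite hb hd.
    by rewrite eqxx /= ?orbT ?andbF.
  case E: (s ++ [:: a]) => [|x s']; first by move/(congr1 size): E; rewrite size_cat addn1.
  rewrite E in hu'; exact: Ts_noncyc.
Qed.

Lemma iter_maxn r n : iter n.+1 (maxn r) 0%N = r.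
Proof. by elim: n => [|n IH] /=; rewrite ?maxn0 // -[in X in maxn _ X]/(iter n.+1 _ _) IH maxnn. Qed.

Local Open Scope ring_scope.

Theorem proposition10 (R : realType) (eps : R) (r : nat) :
  0 < eps -> (0 < r)%N ->
  exists (n : nat) (G T : rel 'I_n),
    [/\ simple_graph G, maxdeg G = r, is_tree T,
        ((3 * maxdeg G + leaves T)%:R - 2 < (1 + eps) * n%:R) &
        ~ pack G T].
Proof.
move=> heps hr.
pose k := r.+1.
have hk : (0 < k)%N by [].
pose M := Num.Def.archi_bound ((3 * r)%:R / eps).
have hM : (3 * r)%:R / eps < M%:R by apply: archi_boundP; rewrite divr_ge0 // ltW.
pose m := M.+1.
have hn : (0 < k * m)%N by rewrite muln_gt0.
have hdeg : forall x : 'I_(k * m), deg (Gb k m) x = r by move=> x; rewrite deg_Gb.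
have hmax : maxdeg (Gb k m) = r.
  rewrite /maxdeg (eq_bigr (fun=> r)) ?big_const ?card_ord //.
  by case: (k * m)%N hn => // n _; rewrite iter_maxn.
exists (k * m)%N, (Gb k m), (@Ts (k * m)); split.
- split; first by move=> x y; rewrite /Gb eq_sym (eq_sym (x %/ k)%N).
  by move=> x; rewrite /Gb eqxx.
- exact: hmax.
- exact: Ts_tree.
- rewrite hmax.
  have hl : (leaves (@Ts (k * m)) <= k * m)%N.
    by rewrite /leaves (leq_trans (max_card _)) // card_ord.
  have h1 : (3 * r + leaves (@Ts (k * m)))%:R <= (3 * r)%:R + (k * m)%:R :> R.
    by rewrite -natrD ler_nat leq_add2l.
  have h2 : (3 * r)%:R < eps * (k * m)%:R :> R.
    rewrite -ltr_pdivrMl // mulrC (lt_le_trans hM) // ler_nat.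
    rewrite /m /k; nia.
  rewrite mulrDl mul1r.
  move: h1 h2; set X := _%:R; set A := _%:R; set N := _%:R; set e := eps * N.
  move=> h1 h2; lra.
- case=> f [finj hf].
  have [g fK gK] := injF_bij finj.
  pose z : 'I_(k * m) := Ordinal hn.
  have : (0 < deg (Gb k m) (f z))%N by rewrite hdeg.
  rewrite /deg card_gt0 => /set0Pn [u]; rewrite inE => hu.
  have hw : Ts (k * m) z (g u).
    rewrite /Ts eqxx orTb andbT.
    apply/eqP => hzg; move: hu; rewrite /Gb hzg gK eqxx.
    by [].
  by move: (hf _ _ hw); rewrite gK hu.
Qed.
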